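(* Let $H:\mathbb{R}^{2m}\to\mathbb{R}$ be smooth and let $\bar y\in\mathbb{R}^{2m}$ with $F'=SH_{yy}(\bar y)$ invertible. Consider the scheme $$y_{n+1}-y_n=\theta_n\,S\,\bar\nabla H(y_n,y_{n+1}),\qquad \theta_n=2\Big(SR+F'\coth\frac{h_nF'}{2}\Big)^{-1},$$ where $\bar\nabla H$ is the coordinate increment discrete gradient. Here $R=(R_{jk})$ is the antisymmetric matrix with $$R_{jk}=H_{y^jy^k}\ (k<j),\qquad R_{jj}=0,\qquad R_{jk}=-H_{y^jy^k}\ (k>j),$$ evaluated at $\bar y$. This scheme is energy-preserving: $H(y_{n+1})=H(y_n)$.
   Context: Notation: - $y=(x,p)\in\mathbb{R}^{2m}$ with $y^1,\dots,y^m$ the components of $x$ and $y^{m+1},\dots,y^{2m}$ those of $p$; $y_n=(x_n,p_n)$ and $h_n$ is the time step. - $S=\begin{pmatrix}0&1\\-1&0\end{pmatrix}$ with $m\times m$ blocks. - $H_{yy}$ is the Hessian of $H$. The coordinate increment discrete gradient has components $$\frac{\Delta H}{\Delta y^j}=\frac{H(\hat y^j_n)-H(\hat y^{j-1}_n)}{y^j_{n+1}-y^j_n},\qquad \hat y^j_n=(y^1_{n+1},\dots,y^j_{n+1},y^{j+1}_n,\dots,y^{2m}_n),$$ with the partial derivative as limit when $y^j_{n+1}=y^j_n$. *)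

(* Defs.v *)
From HB Require Import structures.
From mathcomp Require Import all_boot all_order all_algebra.
From mathcomp Require Import all_classical all_reals all_analysis.
Set Implicit Arguments. Unset Strict Implicit. Unset Printing Implicit Defensive.
Import Order.TTheory GRing.Theory Num.Theory.
Import numFieldNormedType.Exports.
Local Open Scope ring_scope.

Section Defs.
Variable R : realType.

Definition basis_cV (n : nat) (j : 'I_n) : 'cV[R]_n := delta_mx j 0.

Definition partial (n : nat) (j : 'I_n) (f : 'cV[R]_n -> R) : 'cV[R]_n -> R :=
  fun x => 'D_(basis_cV j) f x.

Fixpoint iter_partial (n : nat) (l : seq 'I_n) (f : 'cV[R]_n -> R) : 'cV[R]_n -> R :=
  match l with
  | [::] => f
  | j :: l' => partial j (iter_partial l' f)
  end.

Definition smooth (n : nat) (f : 'cV[R]_n -> R) : Prop :=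
  forall (l : seq 'I_n) (x : 'cV[R]_n),
    {for x, continuous (iter_partial l f)} /\
    forall j : 'I_n, derivable (iter_partial l f) x (basis_cV j).

Definition hessian (n : nat) (f : 'cV[R]_n -> R) (x : 'cV[R]_n) : 'M[R]_n :=
  \matrix_(j, k) partial j (partial k f) x.

Definition symplS (m : nat) : 'M[R]_(m + m) := block_mx 0 1%:M (- 1%:M) 0.

Definition expm (n : nat) (A : 'M[R]_n) : 'M[R]_n :=
  \matrix_(i, j) limn (fun N : nat => \sum_(k < N) (A ^+ k) i j / (k`!)%:R).

Definition coth_den (n : nat) (A : 'M[R]_n) : 'M[R]_n := expm A - expm (- A).
Definition cothm (n : nat) (A : 'M[R]_n) : 'M[R]_n :=
  (expm A + expm (- A)) *m invmx (coth_den A).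

Definition antisymR (n : nat) (Hyy : 'M[R]_n) : 'M[R]_n :=
  \matrix_(j, k) (if (k < j)%N then Hyy j k
                  else if (j < k)%N then - Hyy j k else 0).

(* Intermediate point  hat y^j = (y'^1..y'^j, y^{j+1}..y^n)  (j = 0..n):
   the first j coordinates come from y', the rest from y. *)
Definition hat_pt (n : nat) (y y' : 'cV[R]_n) (j : nat) : 'cV[R]_n :=
  \col_i (if (i < j)%N then y' i 0 else y i 0).

(* With 0-based index j, the
   component is (H(hat y^{j+1}) - H(hat y^j)) / (y'_j - y_j), and the
   partial derivative dH/dy^j at hat y^j (= hat y^{j+1}) when y'_j = y_j. *)
Definition coord_incr_dgrad (n : nat) (H : 'cV[R]_n -> R) (y y' : 'cV[R]_n)
  : 'cV[R]_n :=
  \col_j (if y' j 0 != y j 0 then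
            (H (hat_pt y y' j.+1) - H (hat_pt y y' j)) / (y' j 0 - y j 0)
          else partial j H (hat_pt y y' j)).

Definition theta_inv_half (m : nat) (Rm Fp : 'M[R]_(m + m)) (h : R)
  : 'M[R]_(m + m) :=
  symplS m *m Rm + Fp *m cothm ((h / 2) *: Fp).
Definition theta (m : nat) (Rm Fp : 'M[R]_(m + m)) (h : R) : 'M[R]_(m + m) :=
  2 *: invmx (theta_inv_half Rm Fp h).

End Defs.

(* Main.v *)
Require Import Defs.
From HB Require Import structures.
From mathcomp Require Import all_boot all_order all_algebra.
From mathcomp Require Import all_classical all_reals all_analysis.
From mathcomp Require Import lra.
Import Order.TTheory GRing.Theory Num.Theory.
Import numFieldNormedType.Exports.
Local Open Scope ring_scope.
Set Implicit Arguments. Unset Strict Implicit. Unset Printing Implicit Defensive.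
Definition expsum (R : realType) n (A : 'M[R]_n) (N : nat) : 'M[R]_n :=
  \sum_(k < N) (k`!%:R)^-1 *: A ^+ k.

Lemma expsumE (R : realType) n (A : 'M[R]_n) N i j :
  expsum A N i j = \sum_(k < N) (A ^+ k) i j / (k`!)%:R.
Proof. rewrite /expsum summxE; apply: eq_bigr => k _; by rewrite mxE mulrC. Qed.

Lemma entry_bound (R : realType) n (A : 'M[R]_n) k i j :
  `|(A ^+ k) i j| <= (\sum_a \sum_b `|A a b|) ^+ k.
Proof.
set s := \sum_a \sum_b `|A a b|.
have s0 : 0 <= s by rewrite sumr_ge0 // => a _; rewrite sumr_ge0.
elim: k i j => [|k IH] i j.
  rewrite expr0 mxE; case: (i == j) => /=; rewrite ?normr1 ?normr0 //.
rewrite exprSr mxE exprSr.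
apply: (le_trans (ler_norm_sum _ _ _)).
have -> : \sum_l `|(A ^+ k) i l * A l j| = \sum_l `|(A ^+ k) i l| * `|A l j|.
  by apply: eq_bigr => l _; rewrite normrM.
apply: (le_trans (y := \sum_l s ^+ k * `|A l j|)).
  by apply: ler_sum => l _; rewrite ler_wpM2r.
rewrite -mulr_sumr ler_wpM2l ?exprn_ge0 //.
apply: ler_sum => a _.
by rewrite (bigD1 j) //= lerDl sumr_ge0.
Qed.

Lemma expm_entry_cvg (R : realType) n (A : 'M[R]_n) i j :
  cvgn (fun N : nat => \sum_(k < N) (A ^+ k) i j / (k`!)%:R).
Proof.
set u := fun k : nat => (A ^+ k) i j / (k`!)%:R.
have -> : (fun N : nat => \sum_(k < N) (A ^+ k) i j / (k`!)%:R) = series u.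
  by apply/funext => N; rewrite /series /= big_mkord.
apply: (@normed_cvg _ R^o).
set s := \sum_a \sum_b `|A a b|.
have s0 : 0 <= s by apply: sumr_ge0 => a _; apply: sumr_ge0.
apply: (@series_le_cvg _ _ (exp_coeff s)).
- move=> k; exact: normr_ge0.
- move=> k; exact: exp_coeff_ge0.
- move=> k; rewrite /exp_coeff /= /u normrM.
  have f0 : 0 < (k`!)%:R :> R by rewrite ltr0n fact_gt0.
  rewrite normrV ?unitfE ?gt_eqF // (gtr0_norm f0).
  apply: ler_wpM2r; first by rewrite invr_ge0 ltW.
  exact: entry_bound.
- exact: is_cvg_series_exp_coeff.
Qed.


Lemma lim_mulsum (R : realType) n (c : 'I_n -> R) (f : 'I_n -> nat -> R) :
  (forall l, cvgn (f l)) ->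
  limn (fun N => \sum_l c l * f l N) = \sum_l c l * limn (f l).
Proof.
move=> cf; apply: cvg_lim => //.
apply: cvg_big; first by apply: add_continuous.
move=> l _; exact: cvgMl_tmp.
Qed.

Lemma expm_entry (R : realType) n (A : 'M[R]_n) i j :
  expm A i j = limn (fun N => expsum A N i j).
Proof. by rewrite mxE; do 2 f_equal; apply/funext => N; rewrite expsumE. Qed.

Lemma expsum_cvg (R : realType) n (A : 'M[R]_n) i j : cvgn (fun N => expsum A N i j).
Proof.
have -> : (fun N => expsum A N i j) = (fun N : nat => \sum_(k < N) (A ^+ k) i j / (k`!)%:R).
  by apply/funext => N; rewrite expsumE.
exact: expm_entry_cvg.
Qed.

Lemma expm_conj (R : realType) n (P A B : 'M[R]_n) :
  P *m A = B *m P -> P *m expm A = expm B *m P.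
Proof.
move=> hPAB.
have hk : forall k, P *m A ^+ k = B ^+ k *m P.
  elim=> [|k IH]; first by rewrite !expr0 mul1mx mulmx1.
  have mE : forall X Y : 'M[R]_n, X * Y = X *m Y by [].
  by rewrite exprSr mE mulmxA IH -mulmxA hPAB mulmxA -(mE (B ^+ k) B) -exprSr.
have hs : forall N, P *m expsum A N = expsum B N *m P.
  move=> N; rewrite /expsum mulmx_sumr mulmx_suml; apply: eq_bigr => k _.
  by rewrite -scalemxAr -scalemxAl hk.
apply/matrixP => i j; rewrite !mxE.
under eq_bigr do rewrite expm_entry.
under [RHS]eq_bigr do rewrite expm_entry mulrC.
rewrite -!lim_mulsum; try (move=> l; exact: expsum_cvg).
do 2 f_equal; apply/funext => N.
have := congr1 (fun M : 'M[R]_n => M i j) (hs N); rewrite !mxE => ->.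
by apply: eq_bigr => l _; rewrite mulrC.
Qed.

Lemma trmxXn (R : realType) n (A : 'M[R]_n) k : (A^T) ^+ k = (A ^+ k)^T.
Proof.
have mE : forall X Y : 'M[R]_n, X * Y = X *m Y by [].
elim: k => [|k IH]; first by rewrite !expr0 trmx1.
by rewrite exprS exprSr IH !mE trmx_mul.
Qed.

Lemma expm_tr (R : realType) n (A : 'M[R]_n) : expm (A^T) = (expm A)^T.
Proof.
apply/matrixP => i j; rewrite !mxE; do 2 f_equal; apply/funext => N.
by apply: eq_bigr => k _; rewrite trmxXn mxE.
Qed.
Lemma trN (R : realType) m n (A : 'M[R]_(m, n)) : (- A)^T = - A^T.
Proof. by apply/matrixP => i j; rewrite !mxE. Qed.
Lemma trD (R : realType) m n (A B : 'M[R]_(m, n)) : (A + B)^T = A^T + B^T.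
Proof. by apply/matrixP => i j; rewrite !mxE. Qed.
Lemma trB (R : realType) m n (A B : 'M[R]_(m, n)) : (A - B)^T = A^T - B^T.
Proof. by apply/matrixP => i j; rewrite !mxE. Qed.
Lemma trZ (R : realType) m n c (A : 'M[R]_(m, n)) : (c *: A)^T = c *: A^T.
Proof. by apply/matrixP => i j; rewrite !mxE. Qed.

Lemma SS (R : realType) m : symplS R m *m symplS R m = - 1%:M.
Proof.
rewrite /symplS mulmx_block !mul0mx !mulmx0 !mul1mx !mulmx1 !add0r !addr0.
rewrite (scalar_mx_block m m) opp_block_mx !oppr0.
by [].
Qed.

Lemma ST (R : realType) m : (symplS R m)^T = - symplS R m.
Proof.
by rewrite /symplS tr_block_mx !trmx0 trN trmx1 opp_block_mx !oppr0 opprK.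
Qed.

Lemma antisym_tr (R : realType) n (K : 'M[R]_n) :
  K^T = K -> (antisymR K)^T = - antisymR K.
Proof.
move=> hK; apply/matrixP => i j; rewrite !mxE.
have hK' : K j i = K i j by rewrite -{1}hK mxE.
case: (ltngtP i j) => hij.
- by rewrite hK' opprK.
- by rewrite hK'.
- by rewrite oppr0.
Qed.

Lemma KC_skew (R : realType) n (K S : 'M[R]_n) (c : R) :
  K^T = K -> S^T = - S ->
  let A := c *: (S *m K) in
  let D := expm A - expm (- A) in
  D \in unitmx ->
  (K *m ((expm A + expm (- A)) *m invmx D))^T
    = - (K *m ((expm A + expm (- A)) *m invmx D)).
Proof.
move=> hK hS A D Du.
set E := expm A; set E' := expm (- A).
have KA : K *m A = (- A)^T *m K.
  by rewrite /A trN trZ trmx_mul hS hK mulmxN scalerN opprK -scalemxAl -scalemxAr mulmxA.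
have KA' : K *m (- A) = (- - A)^T *m K.
  by rewrite opprK /A mulmxN trZ trmx_mul hS hK mulmxN scalerN mulNmx -scalemxAl -scalemxAr mulmxA.
have KE : K *m E = E'^T *m K by rewrite /E (expm_conj KA) expm_tr.
have KE' : K *m E' = E^T *m K by rewrite /E' (expm_conj KA') opprK expm_tr.
have AE : A *m E = E *m A by rewrite /E (expm_conj (erefl (A *m A))).
have EE' : E *m E' = E' *m E.
  apply: expm_conj; by rewrite mulmxN mulNmx AE.
have DK : D^T *m K = - (K *m D).
  by rewrite /D trB mulmxBl -KE -KE' mulmxBr opprB.
have QK : (E + E')^T *m K = K *m (E + E').
  by rewrite trD mulmxDl -KE -KE' mulmxDr addrC.
have DQ : D *m (E + E') = (E + E') *m D.
  by rewrite /D mulmxBl mulmxBr !mulmxDr !mulmxDl EE'.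
have DtU : D^T \in unitmx by rewrite unitmx_tr.
have iDK : invmx (D^T) *m K = - (K *m invmx D).
  have KD : K *m D = - (D^T *m K) by rewrite DK opprK.
  by rewrite -[invmx _ *m K](mulmxK Du) -(mulmxA (invmx _)) KD mulmxN (mulKmx DtU) mulNmx.
have iDQ : invmx D *m (E + E') = (E + E') *m invmx D.
  by rewrite -[invmx D *m (E + E')](mulmxK Du) -(mulmxA (invmx D)) -DQ (mulKmx Du).
rewrite trmx_mul hK trmx_mul trmx_inv -mulmxA QK (mulmxA (invmx _)) iDK mulNmx -(mulmxA K (invmx D)) iDQ.
by rewrite mulmxA.
Qed.
Lemma telescope_dg (R : realType) n (H : 'cV[R]_n -> R) (y y' : 'cV[R]_n) :
  \sum_j coord_incr_dgrad H y y' j 0 * (y' - y) j 0 = H y' - H y.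
Proof.
have hterm : forall j : 'I_n, coord_incr_dgrad H y y' j 0 * (y' - y) j 0
   = H (hat_pt y y' j.+1) - H (hat_pt y y' j).
  move=> j; rewrite !mxE.
  case: ifPn => hne.
    by rewrite divfK // subr_eq0.
  move/negPn/eqP: hne => he.
  rewrite he subrr mulr0.
  have -> : hat_pt y y' j.+1 = hat_pt y y' j.
    apply/matrixP => i k; rewrite !mxE ltnS.
    case: (ltngtP i j) => hij //.
    by have -> : i = j by apply: val_inj.
  by rewrite subrr.
rewrite (eq_bigr _ (fun j _ => hterm j)).
rewrite -(big_mkord xpredT (fun j => H (hat_pt y y' j.+1) - H (hat_pt y y' j))).
rewrite telescope_sumr //.
have -> : hat_pt y y' n = y'.
  by apply/matrixP => i k; rewrite !mxE ltn_ord (ord1 k).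
have -> : hat_pt y y' 0 = y.
  by apply/matrixP => i k; rewrite !mxE (ord1 k).
by [].
Qed.

Lemma line_deriv (R : realType) n (f : 'cV[R]_n -> R) (v p : 'cV[R]_n) (s : R) :
  derivable f (s *: v + p) v ->
  is_derive s 1 (fun t : R => f (t *: v + p)) ('D_v f (s *: v + p)).
Proof.
move=> hd.
have E : (fun h : R => h^-1 *: (((fun t : R => f (t *: v + p)) \o shift s) (h *: 1)
            - f (s *: v + p)))
       = (fun h : R => h^-1 *: ((f \o shift (s *: v + p)) (h *: v) - f (s *: v + p))).
  apply/funext => h /=.
  by rewrite /shift /= [h *: 1]mulr1 scalerDl addrA.
have hd' : derivable (fun t : R => f (t *: v + p)) s 1.
  by rewrite /derivable E.
apply: DeriveDef => //.
by rewrite /derive E.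
Qed.

Lemma mixed (R : realType) n (f : 'cV[R]_n -> R) (a b x : 'cV[R]_n) (t : R) :
  0 < t ->
  (forall y, derivable f y a) -> (forall y, derivable ('D_a f) y b) ->
  exists σ, exists τ, [/\ 0 <= σ <= t, 0 <= τ <= t &
   f (t *: a + (x + t *: b)) - f (t *: a + x) - f (x + t *: b) + f x
     = t * t * 'D_b ('D_a f) (τ *: b + (σ *: a + x))].
Proof.
move=> t0 hfa hfab.
pose u : R -> R := (fun s : R => f (s *: a + (x + t *: b))) - (fun s : R => f (s *: a + x)).
pose du := fun s : R => 'D_a f (s *: a + (x + t *: b)) - 'D_a f (s *: a + x).
have hu : forall s : R, is_derive s (1 : R) u (du s).
  move=> s; apply: is_deriveB; exact: line_deriv.
have [σ hσ Eu] := MVT t0 (fun s _ => hu s)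
  (derivable_within_continuous (fun s _ => @ex_derive _ _ _ _ _ _ _ (hu s))).
pose w := fun r : R => 'D_a f (r *: b + (σ *: a + x)).
have hw : forall r : R, is_derive r (1 : R) w ('D_b ('D_a f) (r *: b + (σ *: a + x))).
  move=> r; exact: line_deriv.
have [τ hτ Ew] := MVT t0 (fun s _ => hw s)
  (derivable_within_continuous (fun s _ => @ex_derive _ _ _ _ _ _ _ (hw s))).
exists σ, τ; split.
- by rewrite !ltW ?(itvP hσ).
- by rewrite !ltW ?(itvP hτ).
have e1 : u t - u 0 = f (t *: a + (x + t *: b)) - f (t *: a + x) - f (x + t *: b) + f x.
  have uE : forall s, u s = f (s *: a + (x + t *: b)) - f (s *: a + x) by [].
  rewrite !uE !scale0r !add0r; lra.
have e2 : du σ = w t - w 0.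
  rewrite /du /w scale0r add0r; congr (_ - _); congr ('D_a f _).
  by rewrite [RHS]addrCA [x + _]addrC.
rewrite -e1 Eu e2 Ew subr0; lra.
Qed.

Lemma dist_bound (R : realType) n (x p q : 'cV[R]_n) (σ τ t : R) :
  0 <= σ <= t -> 0 <= τ <= t ->
  `|x - (τ *: q + (σ *: p + x))| <= t * (`|p| + `|q|).
Proof.
move=> /andP[s0 st] /andP[r0 rt].
have -> : x - (τ *: q + (σ *: p + x)) = - (τ *: q + σ *: p).
  by rewrite !opprD addrCA (addrCA x) subrr addr0.
rewrite normrN (le_trans (ler_normD _ _)) // !normrZ !ger0_norm //.
rewrite mulrDr addrC lerD // ler_wpM2r //.
Qed.

Lemma four_contra (R : realType) (X Y Z : R) :
  0 < X -> Y < X / 4 -> Z < X / 4 -> X <= Y + Z -> False.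
Proof. move=> *; lra. Qed.

Lemma clairaut (R : realType) n (f : 'cV[R]_n -> R) (a b x : 'cV[R]_n) :
  (forall y, derivable f y a) -> (forall y, derivable f y b) ->
  (forall y, derivable ('D_a f) y b) -> (forall y, derivable ('D_b f) y a) ->
  {for x, continuous ('D_b ('D_a f))} -> {for x, continuous ('D_a ('D_b f))} ->
  'D_b ('D_a f) x = 'D_a ('D_b f) x.
Proof.
move=> hfa hfb hfab hfba hc1 hc2.
set c1 := 'D_b ('D_a f) in hc1 *; set c2 := 'D_a ('D_b f) in hc2 *.
apply/eqP; rewrite -subr_eq0; apply/negPn/negP => hne.
set d := c1 x - c2 x in hne.
have dp : 0 < `|d| by rewrite normr_gt0.
have ep : 0 < `|d| / 4 by rewrite divr_gt0.
have [e1 e1p H1] := (nbhs_normP _ _).1 ((cvgrPdist_lt _ _).1 hc1 _ ep).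
have [e2 e2p H2] := (nbhs_normP _ _).1 ((cvgrPdist_lt _ _).1 hc2 _ ep).
set t := Num.min e1 e2 / (`|a| + `|b| + 1).
have den : 0 < `|a| + `|b| + 1 by rewrite ltr_pwDr // addr_ge0.
have mp : 0 < Num.min e1 e2 by rewrite lt_min e1p e2p.
have tp : 0 < t by rewrite divr_gt0.
have tb : t * (`|a| + `|b|) < Num.min e1 e2.
  apply: (lt_le_trans (y := t * (`|a| + `|b| + 1))); first by rewrite ltr_pM2l // ltrDl.
  by rewrite /t divfK ?gt_eqF.
have [σ [τ [hσ hτ E1]]] := mixed x tp hfa hfab.
have [σ' [τ' [hσ' hτ' E2]]] := mixed x tp hfb hfba.
have eqc : c1 (τ *: b + (σ *: a + x)) = c2 (τ' *: a + (σ' *: b + x)).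
  apply: (mulfI (x := t * t)); first by rewrite mulf_neq0 // gt_eqF.
  rewrite /c1 /c2; apply: (etrans (esym E1)); apply: (etrans _ E2).
  have -> : t *: a + (x + t *: b) = t *: b + (x + t *: a).
    by rewrite addrCA [RHS]addrCA (addrC (t *: a)).
  rewrite (addrC (t *: a) x) (addrC x (t *: b)).
  set P1 := f (t *: b + (x + t *: a)); set P2 := f (x + t *: a); set P3 := f (t *: b + x).
  by rewrite -(addrA P1) (addrC (- P2)) addrA.
have b1 : `|c1 x - c1 (τ *: b + (σ *: a + x))| < `|d| / 4.
  apply: H1 => /=.
  apply: (le_lt_trans (dist_bound _ _ _ hσ hτ)).
  apply: (lt_le_trans tb); by rewrite ge_min lexx.
have b2 : `|c2 x - c2 (τ' *: a + (σ' *: b + x))| < `|d| / 4.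
  apply: H2 => /=.
  apply: (le_lt_trans (dist_bound _ _ _ hσ' hτ')).
  rewrite (addrC `|b|).
  apply: (lt_le_trans tb); by rewrite ge_min lexx orbT.
have : `|d| <= `|c1 x - c1 (τ *: b + (σ *: a + x))| + `|c2 x - c2 (τ' *: a + (σ' *: b + x))|.
  rewrite [X in _ <= _ + X]distrC eqc.
  exact: (ler_distD (c2 (τ' *: a + (σ' *: b + x))) (c1 x) (c2 x)).
move=> h; exact: (four_contra dp b1 b2 h).
Qed.

Lemma hessian_sym (R : realType) n (H : 'cV[R]_n -> R) x :
  smooth H -> (hessian H x)^T = hessian H x.
Proof.
move=> hs; apply/matrixP => i j; rewrite !mxE.
have h1 : forall y, derivable H y (basis_cV R i) := fun y => (proj2 (hs [::] y)) i.
have h2 : forall y, derivable H y (basis_cV R j) := fun y => (proj2 (hs [::] y)) j.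
have h3 : forall y, derivable ('D_(basis_cV R i) H) y (basis_cV R j) := fun y => (proj2 (hs [:: i] y)) j.
have h4 : forall y, derivable ('D_(basis_cV R j) H) y (basis_cV R i) := fun y => (proj2 (hs [:: j] y)) i.
have h5 : {for x, continuous ('D_(basis_cV R j) ('D_(basis_cV R i) H))} := (proj1 (hs [:: j; i] x)).
have h6 : {for x, continuous ('D_(basis_cV R i) ('D_(basis_cV R j) H))} := (proj1 (hs [:: i; j] x)).
exact: (clairaut h1 h2 h3 h4 h5 h6).
Qed.


Lemma W_skew (R : realType) m (K : 'M[R]_(m + m)) (c : R) :
  K^T = K ->
  let S := symplS R m in
  let A := c *: (S *m K) in
  let D := expm A - expm (- A) in
  D \in unitmx ->
  let M := S *m antisymR K + (S *m K) *m ((expm A + expm (- A)) *m invmx D) in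
  (S *m M)^T = - (S *m M).
Proof.
move=> hK S A D Du M.
have hKC := KC_skew hK (ST R m) Du.
set C := (expm A + expm (- A)) *m invmx D in hKC *.
have -> : S *m M = - antisymR K - K *m C.
  by rewrite /M mulmxDr !mulmxA /S SS !mulNmx !mul1mx.
rewrite trB trN (antisym_tr hK). move: hKC. rewrite /= -/C. move=> ->. by rewrite opprD !opprK.
Qed.

Unset Implicit Arguments.

Theorem proposition6p11 (R : realType) (m : nat)
  (H : 'cV[R]_(m + m) -> R) (ybar : 'cV[R]_(m + m)) (h : R)
  (yn yn1 : 'cV[R]_(m + m)) :
  smooth H ->
  let Fp := symplS R m *m hessian H ybar in
  let Rm := antisymR (hessian H ybar) in
  Fp \in unitmx ->
  coth_den ((h / 2) *: Fp) \in unitmx ->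
  theta_inv_half Rm Fp h \in unitmx ->
  yn1 - yn = theta Rm Fp h *m symplS R m *m coord_incr_dgrad H yn yn1 ->
  H yn1 = H yn.
Proof.
move=> hs Fp Rm _ Du Mu heq.
have hK := hessian_sym ybar hs.
have Wsk : (symplS R m *m theta_inv_half Rm Fp h)^T
    = - (symplS R m *m theta_inv_half Rm Fp h) := @W_skew R m _ (h / 2) hK Du.
move: Wsk heq Mu; rewrite /theta.
set M := theta_inv_half Rm Fp h; set S := symplS R m.
move=> Wsk heq Mu.
set W := S *m M in Wsk.
set g := coord_incr_dgrad H yn yn1 in heq.
set u := yn1 - yn in heq.
apply/eqP; rewrite -subr_eq0; apply/eqP.
rewrite -(telescope_dg H yn yn1) -/g -/u.
have Mu_eq : M *m u = 2 *: (S *m g).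
  by rewrite heq -!scalemxAl -scalemxAr !mulmxA (mulmxV Mu) mul1mx.
have SSg : S *m (S *m g) = - g by rewrite mulmxA /S SS mulNmx mul1mx.
have gW : g = 2^-1 *: - (W *m u).
  rewrite /W -mulmxA Mu_eq -scalemxAr SSg (scalerN 2 g) opprK scalerA mulVf ?pnatr_eq0 //.
  by rewrite scale1r.
have sumE : \sum_j g j 0 * u j 0 = (g^T *m u) 0 0.
  by rewrite mxE; apply: eq_bigr => j _; rewrite [g^T _ _]mxE.
rewrite sumE.
set Z := u^T *m W *m u.
have gu : g^T *m u = 2^-1 *: Z.
  by rewrite {1}gW trZ trN trmx_mul Wsk mulmxN opprK -scalemxAl /Z.
have ZT : Z^T = - Z.
  by rewrite /Z trmx_mul (trmx_mul u^T W) trmxK Wsk mulNmx mulmxN mulmxA.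
have Z0 : Z 0 0 = 0.
  have : Z^T 0 0 = Z 0 0 by rewrite mxE.
  rewrite ZT mxE => e; lra.
by rewrite gu mxE Z0 mulr0.
Qed.
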